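(* Let $G$ be a chordal graph and let $\{C_1,\dots,C_k\}$ be a perfect ordering of its maximal cliques. Define $c:=\max_{i}|C_i|=\omega(G)$ and $s:=\max_i|S_i|$, where $S_i:=(C_1\cup\dots\cup C_{i-1})\cap C_i$ (with $S_1=\emptyset$). If $f:\mathbb{R}\to\mathbb{R}$ is such that $f[-]$ preserves positivity on $\mathcal{P}_{K_c}$ and is Loewner super-additive on $\mathcal{P}_{K_s}$, then $f[-]$ preserves positivity on $\mathcal{P}_G$.
   Context: Graphs are finite and simple; chordal means every cycle on at least four vertices has a chord; $\omega(G)$ is the clique number; $K_m$ is the complete graph on $m$ vertices. For a sequence $B_1,\dots,B_k$ of vertex subsets, set $H_j=B_1\cup\dots\cup B_j$ ($H_0=\emptyset$), $S_j=H_{j-1}\cap B_j$; the sequence is a perfect ordering if (i) for every $1<i\le k$ there is $j<i$ with $S_i\subset B_j$, and (ii) each $S_i$ induces a complete graph. For a graph $H$ on $\{1,\dots,n\}$, $\mathcal{P}_H$ is the set of real symmetric positive semidefinite $n\times n$ matrices $M$ with $m_{ij}=0$ whenever $i\neq j$ and $(i,j)$ is not an edge (so $\mathcal{P}_{K_n}$ is all $n\times n$ PSD matrices). $f[M]:=(f(m_{ij}))$; $f[-]$ preserves positivity on $\mathcal{P}_H$ if $f[M]\in\mathcal{P}_H$ for all $M\in\mathcal{P}_H$. Loewner super-additivity on $\mathcal{P}_H$ is defined for $f$ with $f(0)=0$: $f[M+N]-f[M]-f[N]\in\mathcal{P}_H$ for all $M,N\in\mathcal{P}_H$. *)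

(* Defs.v *)
From HB Require Import structures.
From mathcomp Require Import all_boot all_order all_algebra.
From mathcomp Require Import reals.
Set Implicit Arguments. Unset Strict Implicit. Unset Printing Implicit Defensive.
Import Order.TTheory GRing.Theory Num.Theory.
Local Open Scope ring_scope.

Definition simple_graph (n : nat) (e : rel 'I_n) : Prop :=
  (forall x, ~~ e x x) /\ (forall x y, e x y = e y x).

Definition complete_rel (m : nat) : rel 'I_m := fun x y => x != y.

(* Chordal: every cycle on at least four (distinct) vertices has a chord,
   i.e. an edge between two vertices of the cycle that are not consecutive
   on the cycle. *)
Definition chordal (n : nat) (e : rel 'I_n) : Prop :=
  forall s : seq 'I_n, uniq s -> (4 <= size s)%N -> cycle e s ->
    exists x y, [/\ x \in s, y \in s, x != y, e x y &
      (
      index y s != ((index x s).+1 %% size s)%N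
      /\ index x s != ((index y s).+1 %% size s)%N)].

Definition is_clique (n : nat) (e : rel 'I_n) (C : {set 'I_n}) : Prop :=
  forall x y, x \in C -> y \in C -> x != y -> e x y.

Definition maximal_clique (n : nat) (e : rel 'I_n) (C : {set 'I_n}) : Prop :=
  is_clique e C /\ (forall D : {set 'I_n}, is_clique e D -> C \subset D -> D = C).

(* Perfect orderings of a sequence B_1,...,B_k of vertex subsets
   (0-based indices here).  H_j = B_1 u ... u B_j, S_i = H_{i-1} n B_i. *)
Definition Hset (n : nat) (B : seq {set 'I_n}) (j : nat) : {set 'I_n} :=
  \bigcup_(l < j) nth set0 B l.

Definition Sset (n : nat) (B : seq {set 'I_n}) (i : nat) : {set 'I_n} :=
  Hset B i :&: nth set0 B i.

Definition perfect_ordering (n : nat) (e : rel 'I_n) (B : seq {set 'I_n}) : Prop :=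
  (forall i, (0 < i < size B)%N ->
     exists2 j, (j < i)%N & Sset B i \subset nth set0 B j)
  /\ (forall i, (i < size B)%N -> is_clique e (Sset B i)).

Definition enum_max_cliques (n : nat) (e : rel 'I_n) (B : seq {set 'I_n}) : Prop :=
  uniq B /\ (forall C, C \in B <-> maximal_clique e C).

Definition psd (R : realType) (n : nat) (M : 'M[R]_n) : Prop :=
  M^T = M /\ (forall v : 'cV[R]_n, 0 <= (v^T *m M *m v) 0 0).

Definition inP (R : realType) (n : nat) (e : rel 'I_n) (M : 'M[R]_n) : Prop :=
  psd M /\ (forall i j, i != j -> ~~ e i j -> M i j = 0).

Definition entrywise (R : realType) (n : nat) (f : R -> R) (M : 'M[R]_n) : 'M[R]_n :=
  map_mx f M.

Definition preserves_positivity (R : realType) (n : nat) (e : rel 'I_n) (f : R -> R) : Prop :=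
  forall M : 'M[R]_n, inP e M -> inP e (entrywise f M).

Definition loewner_superadditive (R : realType) (n : nat) (e : rel 'I_n) (f : R -> R) : Prop :=
  f 0 = 0 /\
  (forall M N : 'M[R]_n, inP e M -> inP e N ->
    inP e (entrywise f (M + N) - entrywise f M - entrywise f N)).

(* Main.v *)
Set Warnings "-notation-overridden,-ambiguous-paths".
Require Import Defs.
From mathcomp Require Import all_boot all_order all_algebra.
From mathcomp Require Import reals.
From mathcomp Require Import ring lra.
Set Implicit Arguments. Unset Strict Implicit. Unset Printing Implicit Defensive.
Import Order.TTheory GRing.Theory Num.Theory.
Local Open Scope ring_scope.

Lemma psd_sym (R : realType) n (M : 'M[R]_n) i j : psd M -> M i j = M j i.
Proof. by case=> hT _; rewrite -[in LHS]hT mxE. Qed.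

Lemma psd0 (R : realType) n : psd (0 : 'M[R]_n).
Proof. by split; [rewrite trmx0 | move=> v; rewrite mulmx0 mul0mx mxE]. Qed.

Lemma psdD (R : realType) n (A B : 'M[R]_n) : psd A -> psd B -> psd (A + B).
Proof.
case=> hA qA [hB qB]; split; first by rewrite linearD /= hA hB.
by move=> v; rewrite mulmxDr mulmxDl mxE addr_ge0.
Qed.

Lemma psd_congr (R : realType) n m (P : 'M[R]_(n, m)) (B : 'M[R]_m) :
  psd B -> psd (P *m B *m P^T).
Proof.
case=> hB qB; split; first by rewrite !trmx_mul trmxK hB mulmxA.
move=> v; have := qB (P^T *m v).
by rewrite trmx_mul trmxK !mulmxA.
Qed.

Lemma psd_rank1 (R : realType) n (c : 'cV[R]_n) (a : R) : 0 <= a ->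
  psd (a *: (c *m c^T)).
Proof.
move=> ha; split; first by rewrite linearZ /= trmx_mul trmxK.
move=> v; rewrite -scalemxAr -scalemxAl mxE mulmxA.
have -> : v^T *m c *m c^T *m v = (v^T *m c) *m (v^T *m c)^T.
  by rewrite trmx_mul trmxK !mulmxA.
rewrite mxE big_ord1; apply: mulr_ge0 => //.
set w := v^T *m c.
have -> : w^T 0 0 = w 0 0 by rewrite mxE.
by rewrite -expr2 sqr_ge0.
Qed.

Definition qf (R : realType) n (M : 'M[R]_n) (x : 'cV[R]_n) := (x^T *m M *m x) 0 0.
Definition bf (R : realType) n (M : 'M[R]_n) (x y : 'cV[R]_n) := (x^T *m M *m y) 0 0.

Lemma bfC (R : realType) n (M : 'M[R]_n) x y : M^T = M -> bf M x y = bf M y x.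
Proof.
move=> hT; rewrite /bf -[in LHS](trmxK (x^T *m M *m y)) mxE.
by rewrite !trmx_mul trmxK hT mulmxA.
Qed.

Lemma qfD (R : realType) n (M : 'M[R]_n) x y : M^T = M ->
  qf M (x + y) = qf M x + qf M y + 2 * bf M x y.
Proof.
move=> hT; rewrite /qf (_ : (x + y)^T = x^T + y^T); last by rewrite linearD.
have E : forall A B : 'M[R]_1, (A + B) 0 0 = A 0 0 + B 0 0 by move=> A B; rewrite mxE.
rewrite !mulmxDl !mulmxDr !E.
rewrite -/(bf M x y) -/(bf M y x) (bfC _ _ hT) -/(qf M x) -/(qf M y); ring.
Qed.

Lemma trZ (R : realType) m n (t : R) (x : 'M[R]_(m, n)) : (t *: x)^T = t *: x^T.
Proof. by rewrite linearZ. Qed.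

Lemma qfZ (R : realType) n (M : 'M[R]_n) t x : qf M (t *: x) = t ^+ 2 * qf M x.
Proof.
rewrite /qf trZ -scalemxAl -scalemxAr.
by rewrite -scalemxAl !mxE mulrA expr2.
Qed.

Lemma bfZl (R : realType) n (M : 'M[R]_n) t x y : bf M (t *: x) y = t * bf M x y.
Proof. by rewrite /bf trZ -!scalemxAl !mxE. Qed.

Lemma bf_delta (R : realType) n (M : 'M[R]_n) i j :
  bf M (delta_mx i 0) (delta_mx j 0) = M i j.
Proof.
by rewrite /bf trmx_delta -rowE -colE !mxE.
Qed.

Lemma qf_delta (R : realType) n (M : 'M[R]_n) i : qf M (delta_mx i 0) = M i i.
Proof. exact: bf_delta. Qed.

Lemma psd_zero_row (R : realType) n (M : 'M[R]_n) v j :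
  psd M -> M v v = 0 -> M v j = 0.
Proof.
move=> [hT hq] hv; have [<-//|nvj] := eqVneq v j.
apply/eqP; apply/negPn/negP => hb.
move: hb; set b := M v j => hb.
pose t := - (M j j + 1) / (2 * b).
have := hq (t *: delta_mx v 0 + delta_mx j 0).
rewrite -/(qf M _) qfD // qfZ !qf_delta bfZl bf_delta hv -/b.
have -> : t ^+ 2 * 0 + M j j + 2 * (t * b) = -1.
  by rewrite /t; field.
by move=> h; have := lt_le_trans (ltrN10 R) h; rewrite ltxx.
Qed.

Lemma trB (R : realType) m n (x y : 'M[R]_(m, n)) : (x - y)^T = x^T - y^T.
Proof. by rewrite linearB. Qed.

Lemma psd_schur (R : realType) n (M : 'M[R]_n) v : psd M -> 0 < M v v ->
  psd (M - (M v v)^-1 *: (col v M *m (col v M)^T)).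
Proof.
move=> [hT hq] hd; split.
  by rewrite trB trZ trmx_mul trmxK hT.
move=> x.
set d := M v v; set c := col v M.
have hc : c^T = (delta_mx v 0)^T *m M by rewrite /c tr_col hT rowE trmx_delta.
set a := bf M (delta_mx v 0) x.
have E : (x^T *m (M - d^-1 *: (c *m c^T)) *m x) 0 0 = qf M x - d^-1 * a ^+ 2.
  rewrite mulmxBr mulmxBl mxE -/(qf M x) mxE; congr (_ - _).
  rewrite -scalemxAr -scalemxAl mxE; congr (_ * _).
  have -> : x^T *m (c *m c^T) *m x = (c^T *m x)^T *m (c^T *m x).
    by rewrite trmx_mul trmxK !mulmxA.
  rewrite mxE big_ord1 hc mxE /a /bf expr2; congr (_ * _).
pose y := x + (- a / d) *: delta_mx v 0.
have := hq y; rewrite -/(qf M y) /y qfD // qfZ qf_delta (bfC _ _ hT) bfZl -/a -/d E.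
have -> : qf M x + (- a / d) ^+ 2 * d + 2 * (- a / d * a) = qf M x - d^-1 * a ^+ 2.
  by field; rewrite gt_eqF.
done.
Qed.

Definition emb (R : realType) n m (X : {set 'I_n}) : 'M[R]_(n, m) :=
  \matrix_(i, a) (if i \in X then ((index i (enum X) == a :> nat))%:R else 0).

Lemma entry3 (R : realType) n m (A : 'M[R]_(n, m)) (B : 'M[R]_m) i j :
  (A *m B *m A^T) i j = ((row i A) *m B *m (row j A)^T) 0 0.
Proof.
have -> : (A *m B *m A^T) i j = (row i (A *m B *m A^T)) 0 j.
  by rewrite [RHS]mxE.
rewrite !row_mul.
have -> : (row i A *m B *m A^T) 0 j = (col j (row i A *m B *m A^T)) 0 0.
  by rewrite [RHS]mxE.
by rewrite colE -mulmxA -colE tr_row.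
Qed.

Lemma index_lt (n m : nat) (X : {set 'I_n}) i : i \in X -> (#|X| <= m)%N ->
  (index i (enum X) < m)%N.
Proof.
move=> hi hX; apply: leq_trans hX; rewrite cardE index_mem mem_enum //.
Qed.

Lemma emb_row_out (R : realType) n m (X : {set 'I_n}) i : i \notin X ->
  row i (emb R m X) = 0.
Proof. by move=> hi; apply/rowP => a; rewrite !mxE (negbTE hi). Qed.

Lemma emb_row_in (R : realType) n m (X : {set 'I_n}) i (hi : (index i (enum X) < m)%N) :
  i \in X -> row i (emb R m X) = delta_mx 0 (Ordinal hi).
Proof.
move=> iX; apply/rowP => a; rewrite !mxE iX /=.
by rewrite eq_sym.
Qed.

Lemma emb_col_in (R : realType) n m (X : {set 'I_n}) i (hi : (index i (enum X) < m)%N) :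
  i \in X -> col (Ordinal hi) (emb R m X) = delta_mx i 0.
Proof.
move=> iX; apply/colP => k; rewrite !mxE /= eqxx andbT.
case: ifP => kX; last first.
  have [ki|//] := eqVneq k i.
  by rewrite ki iX in kX.
congr ((nat_of_bool _)%:R).
have [->|nki] := eqVneq k i; first by rewrite eqxx.
apply/negbTE; apply: contra nki => /eqP h.
have e1 : nth k (enum X) (index k (enum X)) = k by rewrite nth_index // mem_enum.
have e2 : nth k (enum X) (index i (enum X)) = i by rewrite nth_index // mem_enum.
by apply/eqP; rewrite -e1 h e2.
Qed.

Lemma embE_out (R : realType) n m (X : {set 'I_n}) (B : 'M[R]_m) i j :
  ~~ ((i \in X) && (j \in X)) -> (emb R m X *m B *m (emb R m X)^T) i j = 0.
Proof.
rewrite negb_and => h; rewrite entry3.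
case/orP: h => h; first by rewrite (emb_row_out _ _ h) !mul0mx mxE.
by rewrite (emb_row_out _ _ h) trmx0 mulmx0 mxE.
Qed.

Lemma embE_in (R : realType) n m (X : {set 'I_n}) (B : 'M[R]_m) i j
  (hi : (index i (enum X) < m)%N) (hj : (index j (enum X) < m)%N) :
  i \in X -> j \in X ->
  (emb R m X *m B *m (emb R m X)^T) i j = B (Ordinal hi) (Ordinal hj).
Proof.
move=> iX jX; rewrite entry3 (emb_row_in _ hi iX) (emb_row_in _ hj jX).
by rewrite -rowE trmx_delta -colE !mxE.
Qed.

Lemma emb_back (R : realType) n m (X : {set 'I_n}) (A : 'M[R]_n) i j
  (hi : (index i (enum X) < m)%N) (hj : (index j (enum X) < m)%N) :
  i \in X -> j \in X ->
  ((emb R m X)^T *m A *m emb R m X) (Ordinal hi) (Ordinal hj) = A i j.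
Proof.
move=> iX jX; rewrite -{2}(trmxK (emb R m X)) entry3.
rewrite -!tr_col (emb_col_in _ hi iX) (emb_col_in _ hj jX) trmxK.
exact: bf_delta.
Qed.

Lemma subE (R : realType) n (A B : 'M[R]_n) i j : (A - B) i j = A i j - B i j.
Proof. by rewrite !mxE. Qed.
Lemma addE (R : realType) n (A B : 'M[R]_n) i j : (A + B) i j = A i j + B i j.
Proof. by rewrite !mxE. Qed.

Lemma ent (R : realType) n (f : R -> R) (A : 'M[R]_n) i j : entrywise f A i j = f (A i j).
Proof. by rewrite /entrywise mxE. Qed.

Lemma supp0 (R : realType) n (X : {set 'I_n}) (A : 'M[R]_n) i j :
  (forall i j, A i j != 0 -> (i \in X) && (j \in X)) ->
  ~~ ((i \in X) && (j \in X)) -> A i j = 0.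
Proof. by move=> hs h; apply/eqP; apply: contraNT h; apply: hs. Qed.

Lemma pos_transfer (R : realType) n m (X : {set 'I_n}) (f : R -> R) (A : 'M[R]_n) :
  preserves_positivity (@complete_rel m) f -> f 0 = 0 -> (#|X| <= m)%N -> psd A ->
  (forall i j, A i j != 0 -> (i \in X) && (j \in X)) -> psd (entrywise f A).
Proof.
move=> hf f0 hX hA hs.
set P := emb R m X; set B := P^T *m A *m P.
have hB : psd B by have := psd_congr P^T hA; rewrite trmxK.
have [hfB _] : inP (@complete_rel m) (entrywise f B).
  apply: hf; split => // i j h; by rewrite /complete_rel h.
have -> : entrywise f A = P *m entrywise f B *m P^T.
  apply/matrixP => i j; case hij: ((i \in X) && (j \in X)).
    move/andP: hij => [iX jX].
    by rewrite (embE_in _ (index_lt iX hX) (index_lt jX hX)) // !ent emb_back.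
  by rewrite embE_out ?hij // ent (supp0 hs) ?hij.
exact: psd_congr.
Qed.

Lemma sup_transfer (R : realType) n m (X : {set 'I_n}) (f : R -> R) (M1 M2 : 'M[R]_n) :
  loewner_superadditive (@complete_rel m) f -> (#|X| <= m)%N -> psd M1 -> psd M2 ->
  (forall i j, M1 i j != 0 -> M2 i j != 0 -> (i \in X) && (j \in X)) ->
  psd (entrywise f (M1 + M2) - entrywise f M1 - entrywise f M2).
Proof.
move=> [f0 hf] hX h1 h2 hs.
set P := emb R m X; set B1 := P^T *m M1 *m P; set B2 := P^T *m M2 *m P.
have hB1 : psd B1 by have := psd_congr P^T h1; rewrite trmxK.
have hB2 : psd B2 by have := psd_congr P^T h2; rewrite trmxK.
have hin : forall B : 'M[R]_m, psd B -> inP (@complete_rel m) B.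
  move=> B hB; split => // i j h; by rewrite /complete_rel h.
have [hE _] := hf _ _ (hin _ hB1) (hin _ hB2).
set E := _ - _ - _ in hE.
have -> : entrywise f (M1 + M2) - entrywise f M1 - entrywise f M2 = P *m E *m P^T.
  apply/matrixP => i j; case hij: ((i \in X) && (j \in X)).
    move/andP: hij => [iX jX].
    rewrite (embE_in _ (index_lt iX hX) (index_lt jX hX)) // /E.
    by rewrite !subE !ent !addE !emb_back.
  rewrite embE_out ?hij // !subE !ent addE.
  have : (M1 i j == 0) || (M2 i j == 0).
    apply: contraFT hij; rewrite negb_or => /andP [a b]; exact: hs.
  by case/orP => /eqP ->; rewrite f0 ?add0r ?addr0 subr0 subrr.
exact: psd_congr.
Qed.

Definition Pk n (C : seq {set 'I_n}) (k : nat) (i j : 'I_n) : Prop :=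
  exists l, [/\ (l < k)%N, i \in nth set0 C l & j \in nth set0 C l].

Lemma Pk_H n (C : seq {set 'I_n}) k i j : Pk C k i j -> (i \in Hset C k) && (j \in Hset C k).
Proof.
case=> l [lk il jl]; apply/andP; split; apply/bigcupP; exists (Ordinal lk) => //.
Qed.

Lemma r1E (R : realType) n (M : 'M[R]_n) v (a : R) i j :
  (a *: (col v M *m (col v M)^T)) i j = a * (M i v * M j v).
Proof. by rewrite !mxE big_ord1 !mxE. Qed.

Lemma decomp (R : realType) n (C : seq {set 'I_n}) k (s : seq 'I_n) (M : 'M[R]_n) :
  (forall i j, i \in Sset C k -> j \in Sset C k -> Pk C k i j) ->
  psd M ->
  (forall i j, M i j != 0 -> Pk C k i j \/ (i \in nth set0 C k /\ j \in nth set0 C k)) ->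
  (forall i j, i \in nth set0 C k -> i \notin Hset C k -> i \notin s -> M i j = 0) ->
  exists M2 : 'M[R]_n, [/\ psd M2, psd (M - M2),
    (forall i j, M2 i j != 0 -> (i \in nth set0 C k) && (j \in nth set0 C k)) &
    (forall i j, (M - M2) i j != 0 -> Pk C k i j)].
Proof.
move=> hS; set Ck := nth set0 C k; set H := Hset C k.
elim: s M => [|v s IH] M hM hsup hz.
  exists 0; split; [exact: psd0 | by rewrite subr0 | by move=> i j; rewrite mxE eqxx |].
  move=> i j; rewrite subr0 => hij; case: (hsup _ _ hij) => // [[iC jC]].
  have iH : i \in H.
    apply: contraTT hij; move=> iH; by rewrite (hz i j iC iH) ?eqxx.
  have jH : j \in H.
    apply: contraTT hij; move=> jH; rewrite (psd_sym _ _ hM) (hz j i jC jH) ?eqxx //.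
  by apply: hS; rewrite /Sset inE -/H -/Ck ?iH ?jH ?iC ?jC.
have [/andP [vC vH]|hv] := boolP ((v \in Ck) && (v \notin H)); last first.
  apply: IH => // i j iC iH ins; apply: hz => //; rewrite inE negb_or ins andbT.
  apply: contraNneq hv; move=> iv; by rewrite -iv iC iH.
have hcol : forall i, M i v != 0 -> i \in Ck.
  move=> i /hsup [/Pk_H /andP [_ vH']|[]//]; by rewrite vH' in vH.
have [d0|dn0] := eqVneq (M v v) 0.
  apply: IH => // i j iC iH ins.
  have [->|iv] := eqVneq i v; first exact: psd_zero_row.
  by apply: hz => //; rewrite inE negb_or iv.
have dpos : 0 < M v v.
  rewrite lt0r dn0 /=; have := hM.2 (delta_mx v 0); by rewrite -/(qf M _) qf_delta.
set X := (M v v)^-1 *: (col v M *m (col v M)^T).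
have hM' : psd (M - X) by exact: psd_schur.
have hXE : forall i j, X i j = (M v v)^-1 * (M i v * M j v) by move=> i j; rewrite r1E.
have hsup' : forall i j, (M - X) i j != 0 -> Pk C k i j \/ (i \in Ck /\ j \in Ck).
  move=> i j; rewrite subE hXE; have [/eqP ->|hm] := boolP (M i j == 0).
    rewrite sub0r oppr_eq0 mulf_eq0 invr_eq0 (negbTE dn0) /= mulf_eq0.
    by rewrite negb_or => /andP [a b]; right; rewrite !hcol.
  by move=> _; apply: hsup.
have hz' : forall i j, i \in Ck -> i \notin H -> i \notin s -> (M - X) i j = 0.
  move=> i j iC iH ins; rewrite subE hXE.
  have [->|iv] := eqVneq i v.
    by rewrite (psd_sym _ j hM) mulrA mulVf // mul1r subrr.
  have hi : i \notin v :: s by rewrite inE negb_or iv.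
  by rewrite (hz i j iC iH hi) (hz i v iC iH hi) mul0r mulr0 subrr.
have [M2 [h1 h2 h3 h4]] := IH (M - X) hM' hsup' hz'.
exists (M2 + X); split.
+ by apply: psdD => //; apply: psd_rank1; rewrite invr_ge0 ltW.
+ by rewrite opprD addrA addrAC.
+ move=> i j; rewrite addE hXE; have [/eqP ->|hm] := boolP (M2 i j == 0).
    rewrite add0r; rewrite mulf_eq0 invr_eq0 (negbTE dn0) /= mulf_eq0.
    by rewrite negb_or => /andP [a b]; rewrite !hcol.
  by move=> _; apply: h3.
+ by move=> i j; rewrite opprD addrA addrAC; apply: h4.
Qed.

Lemma claim (R : realType) n (C : seq {set 'I_n}) (f : R -> R) (c s : nat) :
  f 0 = 0 ->
  preserves_positivity (@complete_rel c) f ->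
  loewner_superadditive (@complete_rel s) f ->
  (forall l, (l < size C)%N -> #|nth set0 C l| <= c)%N ->
  (forall l, (l < size C)%N -> #|Sset C l| <= s)%N ->
  (forall l, (0 < l < size C)%N -> exists2 j, (j < l)%N & Sset C l \subset nth set0 C j) ->
  forall k, (k <= size C)%N -> forall M : 'M[R]_n, psd M ->
    (forall i j, M i j != 0 -> Pk C k i j) -> psd (entrywise f M).
Proof.
move=> f0 hpos hsup hc hs hpo; elim=> [|k IH] hk M hM hM0.
  have -> : entrywise f M = 0.
    apply/matrixP => i j; rewrite ent mxE.
    have [/eqP -> //|/hM0 [l []]] := boolP (M i j == 0); by [].
  exact: psd0.
have kC : (k < size C)%N by [].
have hS : forall i j, i \in Sset C k -> j \in Sset C k -> Pk C k i j.
  move=> i j; case: k IH hk hM0 kC => [|k] IH hk hM0 kC.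
    by rewrite /Sset /Hset big_ord0 set0I inE.
  have [j0 j0k hsub] := hpo k.+1 kC.
  move=> iS jS; exists j0; split => //; exact: (subsetP hsub).
have hsupM : forall i j, M i j != 0 -> Pk C k i j \/ (i \in nth set0 C k /\ j \in nth set0 C k).
  move=> i j /hM0 [l [lk il jl]]; rewrite ltnS leq_eqVlt in lk.
  case/orP: lk => [/eqP lk|lk]; first by right; rewrite -lk.
  by left; exists l.
have [M2 [h1 h2 h3 h4]] := decomp (s := enum 'I_n) hS hM hsupM
  (fun i j _ _ ins => False_ind _ (negP ins (mem_enum _ i))).
set M1 := M - M2.
have eM : M = M1 + M2 by rewrite /M1 subrK.
have -> : entrywise f M = entrywise f M1 + entrywise f M2 +
    (entrywise f (M1 + M2) - entrywise f M1 - entrywise f M2).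
  by rewrite -eM addrC -(addrA (entrywise f M)) -opprD subrK.
apply: psdD; first apply: psdD.
- exact: (IH (ltnW hk)).
- exact: (pos_transfer (X := nth set0 C k) hpos f0 (hc k kC)).
- apply: (sup_transfer (X := Sset C k) hsup (hs k kC)) => // i j a b.
  have /andP [iH jH] := Pk_H (h4 i j a).
  have /andP [iC jC] := h3 i j b.
  by rewrite !inE iH jH iC jC.
Qed.

Definition cliqueb n (e : rel 'I_n) (D : {set 'I_n}) : bool :=
  [forall x in D, forall y in D, (x != y) ==> e x y].

Lemma cliqueP n (e : rel 'I_n) D : is_clique e D <-> cliqueb e D.
Proof.
split.
  move=> h; apply/forallP => x; apply/implyP => xD; apply/forallP => y.
  by apply/implyP => yD; apply/implyP => xy; apply: h.
move=> /forallP h x y xD yD xy; have := h x; rewrite xD /= => /forallP /(_ y).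
by rewrite yD xy.
Qed.

Lemma in_maxclique n (e : rel 'I_n) (C : seq {set 'I_n}) (D : {set 'I_n}) :
  enum_max_cliques e C -> is_clique e D ->
  exists l, (l < size C)%N /\ D \subset nth set0 C l.
Proof.
move=> [_ hC] /cliqueP hD.
have [A /maxsetP [hA hmax] DA] := maxset_exists hD.
have mA : maximal_clique e A.
  split; first by apply/cliqueP.
  by move=> B /cliqueP hB AB; apply: hmax.
have AC : A \in C by apply/hC.
by exists (index A C); rewrite index_mem AC nth_index.
Qed.

Unset Implicit Arguments.

Theorem corollary3p8 (R : realType) (n : nat) (e : rel 'I_n)
  (C : seq {set 'I_n}) (f : R -> R) :
  simple_graph e -> chordal e ->
  enum_max_cliques e C -> perfect_ordering e C ->
  let c := (\max_(i < size C) #|nth set0 C i|)%N in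
  let s := (\max_(i < size C) #|Sset C i|)%N in
  preserves_positivity (@complete_rel c) f ->
  loewner_superadditive (@complete_rel s) f ->
  preserves_positivity e f.
Proof.
move=> [_ hsym] _ hE [hpo _] c s hpos hsup.
have f0 : f 0 = 0 := hsup.1.
have hc : forall l, (l < size C)%N -> (#|nth set0 C l| <= c)%N.
  move=> l hl; exact: (@leq_bigmax _ (fun i : 'I_(size C) => #|nth set0 C i|) (Ordinal hl)).
have hs : forall l, (l < size C)%N -> (#|Sset C l| <= s)%N.
  move=> l hl; exact: (@leq_bigmax _ (fun i : 'I_(size C) => #|Sset C i|) (Ordinal hl)).
move=> M [hM hz]; split; last first.
  by move=> i j ij nij; rewrite ent hz.
apply: (claim f0 hpos hsup hc hs hpo (leqnn _) hM) => i j hij.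
have cl : is_clique e [set i; j].
  move=> x y; rewrite !inE => /orP [] /eqP -> /orP [] /eqP -> xy //.
  - by rewrite eqxx in xy.
  - by apply/negPn/negP => ne; rewrite (hz _ _ xy ne) eqxx in hij.
  - apply/negPn/negP => ne.
    by rewrite (psd_sym i j hM) (hz _ _ (xy : j != i) ne) eqxx in hij.
  - by rewrite eqxx in xy.
have [l [lC sub]] := in_maxclique hE cl.
exists l; split => //; apply: (subsetP sub); by rewrite !inE eqxx ?orbT.
Qed.
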